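(* Let $(X,\mathcal{A},\mu)$ be a probability space and let $\{E_i\}_{i\in\mathbb{N}}$ be a sequence of sets in $\mathcal{A}$. Suppose there exist constants $C'>0$, $c>0$ and a sequence of finite sets $\mathcal{S}_k\subset\mathbb{Z}$ with $\min\mathcal{S}_k\to+\infty$ as $k\to\infty$ such that for all sufficiently large $k$: $$\sum_{i\in\mathcal{S}_k}\mu(E_i)\ge c\qquad\text{and}\qquad \sum_{\substack{s<t\\ s,t\in\mathcal{S}_k}}\mu(E_s\cap E_t)\le C'\Big(\sum_{i\in\mathcal{S}_k}\mu(E_i)\Big)^2.$$ Suppose in addition that condition (M1) holds. Then $\mu(E_\infty)=1$.
   Context: $E_\infty:=\limsup_{i\to\infty}E_i=\bigcap_{t=1}^\infty\bigcup_{i=t}^\infty E_i$. Condition (M1): for every $\delta>0$ and all natural numbers $q_1<q_2$ there exists $i_0=i_0(q_1,q_2,\delta)$ such that for all $i\ge i_0$, $$\mu(A\cap E_i)\le(1+\delta)\mu(A)\mu(E_i),\qquad\text{where } A=\bigcup_{j=q_1}^{q_2}E_j.$$ *)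

(* Defs.v *)
From HB Require Import structures.
From mathcomp Require Import all_boot all_order all_algebra.
From mathcomp Require Import finmap.
From mathcomp Require Import all_classical all_reals all_analysis.
Set Implicit Arguments. Unset Strict Implicit. Unset Printing Implicit Defensive.
Import Order.TTheory GRing.Theory Num.Theory.

Definition condM1 {d} {T : measurableType d} {R : realType}
  (mu : set T -> \bar R) (E : nat -> set T) : Prop :=
  forall (delta : R), (0 < delta)%R ->
  forall q1 q2 : nat, (q1 < q2)%N ->
  exists i0 : nat, forall i : nat, (i0 <= i)%N ->
    let A := (\bigcup_(j in [set j : nat | (q1 <= j <= q2)%N]) E j)%classic in
    (mu (A `&` E i)%classic <= ((1 + delta)%:E * mu A * mu (E i))%E)%E.

(* Main.v *)
Require Import Defs.
From HB Require Import structures.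
From mathcomp Require Import all_boot all_order all_algebra.
From mathcomp Require Import finmap.
From mathcomp Require Import all_classical all_reals all_analysis.
From mathcomp Require Import measurable_realfun.
From mathcomp Require Import lra zify.
Import Order.TTheory GRing.Theory Num.Theory.
Local Open Scope classical_set_scope.
Local Open Scope ring_scope.
Section L.
Context (d : measure_display) (T : measurableType d) (R : realType)
  (mu : probability T R).

Lemma muE (X : set T) : measurable X -> mu X = (fine (mu X))%:E.
Proof. by move=> mX; rewrite fineK // fin_num_measure. Qed.

Lemma m_ge0 (X : set T) : (0 <= fine (mu X))%R.
Proof. exact/fine_ge0/measure_ge0. Qed.

Lemma m_le1 (X : set T) : measurable X -> (fine (mu X) <= 1)%R.
Proof.
move=> mX; rewrite -lee_fin -muE //; exact: probability_le1.
Qed.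

Lemma intZ (A : set T) (k : R) : measurable A -> (0 <= k)%R ->
  (\int[mu]_(x in setT) (k * \1_A x)%:E = k%:E * mu A)%E.
Proof.
move=> mA k0.
rewrite (integralZl_indic _ (fun _ => A)) //; last by move=> k0'; have := lt_le_trans k0' k0; rewrite ltxx.
by rewrite integral_indic // setIT.
Qed.

Lemma mfZ (A : set T) (k : R) : measurable A ->
  measurable_fun [set: T] ((fun x => (k * \1_A x)%:E) : T -> \bar R).
Proof.
move=> mA; apply/measurable_EFinP.
apply: measurable_funM; [exact: measurable_cst| exact: measurable_indic].
Qed.


Lemma intZ' (A : set T) (k : R) : measurable A -> (0 <= k)%R ->
  (\int[mu]_(x in setT) (k * \1_A x)%:E = (k * fine (mu A))%:E)%E.
Proof. by move=> mA k0; rewrite intZ // [mu A]muE. Qed.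

Lemma CE_lam (F : nat -> set T) (mF : forall i, measurable (F i)) (s : seq nat)
  (lam : R) : 0 <= lam ->
  2 * lam * (\sum_(i <- s) fine (mu (F i))) <=
  \sum_(i <- s) \sum_(j <- s) fine (mu (F i `&` F j)) +
  lam ^+ 2 * fine (mu (\bigcup_(i in [set i | i \in s]) F i)).
Proof.
move=> lam0.
set U := \bigcup_(i in _) F i.
have mU : measurable U by apply: bigcup_measurable => k _; exact: mF.
have mFF i j : measurable (F i `&` F j) by apply: measurableI.
have ind0 (A : set T) x : 0 <= \1_A x :> R by rewrite indicE.
have H : (\int[mu]_(x in setT) (\sum_(i <- s) ((2 * lam) * \1_(F i) x)%:E) <=
   \int[mu]_(x in setT) ((\sum_(i <- s) \sum_(j <- s) (1 * \1_(F i `&` F j) x)%:E)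
      + (lam ^+ 2 * \1_U x)%:E))%E.
  apply: ge0_le_integral => //.
  - move=> x _; apply: sume_ge0 => i _; rewrite lee_fin; apply: mulr_ge0 => //.
    by rewrite mulr_ge0.
  - by apply: emeasurable_sum => i; exact: mfZ.
  - apply: emeasurable_funD; last exact: mfZ.
    apply: emeasurable_sum => i; apply: emeasurable_sum => j; exact: mfZ.
  move=> x _.
  under [X in (_ <= X + _)%E]eq_bigr do rewrite sumEFin.
  rewrite !sumEFin -EFinD lee_fin.
  set N := \sum_(i <- s) (\1_(F i) x : R).
  have e1 : \sum_(i <- s) 2 * lam * \1_(F i) x = 2 * lam * N by rewrite mulr_sumr.
  have e2 : \sum_(i <- s) \sum_(j <- s) 1 * \1_(F i `&` F j) x = N * N.
    rewrite mulr_suml; apply: eq_bigr => i _; rewrite mulr_sumr.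
    by apply: eq_bigr => j _; rewrite mul1r indicI.
  rewrite e1 e2.
  have [Ux|nUx] := pselect (U x).
    rewrite indicE mem_set // mulr1.
    by have := sqr_ge0 (N - lam); rewrite !expr2; nra.
  have -> : N = 0.
    rewrite /N big1_seq // => i /andP[_ si].
    rewrite indicE memNset //= => Fix; apply: nUx; exists i => //.
  rewrite indicE memNset //.
  by rewrite !(mulr0, mul0r, addr0).
rewrite ge0_integral_sum in H; last 2 first.
- by move=> i; exact: mfZ.
- by move=> i x _; rewrite lee_fin; apply: mulr_ge0 => //; rewrite mulr_ge0.
rewrite ge0_integralD in H; last 5 first.
- by [].
- by move=> x _; apply: sume_ge0 => i _; apply: sume_ge0 => j _; rewrite lee_fin mul1r.
- by apply: emeasurable_sum => i; apply: emeasurable_sum => j; exact: mfZ.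
- by move=> x _; rewrite lee_fin mulr_ge0 // sqr_ge0.
- exact: mfZ.
rewrite ge0_integral_sum in H; last 2 first.
- by move=> i; apply: emeasurable_sum => j; exact: mfZ.
- by move=> i x _; apply: sume_ge0 => j _; rewrite lee_fin mul1r.
have l0 : 0 <= 2 * lam by rewrite mulr_ge0.
have I1 : (\sum_(i <- s) \int[mu]_(x in setT) ((2 * lam) * \1_(F i) x)%:E =
   (\sum_(i <- s) 2 * lam * fine (mu (F i)))%:E)%E.
  by rewrite -sumEFin; apply: eq_bigr => i _; rewrite intZ'.
have I2 : (\sum_(i <- s) \int[mu]_(x in setT) (\sum_(j <- s) (1 * \1_(F i `&` F j) x)%:E) =
   (\sum_(i <- s) \sum_(j <- s) fine (mu (F i `&` F j)))%:E)%E.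
  rewrite -sumEFin; apply: eq_bigr => i _.
  rewrite ge0_integral_sum //; try (by move=> j; exact: mfZ);
    try (by move=> j x _; rewrite lee_fin mul1r).
  rewrite -sumEFin; apply: eq_bigr => j _; rewrite intZ' // mul1r //.
have I3 : (\int[mu]_(x in setT) (lam ^+ 2 * \1_U x)%:E = (lam ^+ 2 * fine (mu U))%:E)%E.
  by rewrite intZ' // sqr_ge0.
rewrite I1 I2 I3 -EFinD lee_fin in H.
  by rewrite mulr_sumr.
all: exact: measurableT.
Qed.

Lemma CE (F : nat -> set T) (mF : forall i, measurable (F i)) (s : seq nat) :
  (\sum_(i <- s) fine (mu (F i))) ^+ 2 <=
  fine (mu (\bigcup_(i in [set i | i \in s]) F i)) *
  \sum_(i <- s) \sum_(j <- s) fine (mu (F i `&` F j)).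
Proof.
have H := @CE_lam F mF s.
move: H.
set A := \sum_(i <- s) _; set B := \sum_(i <- s) _; set P := fine _ => H.
have B0 : 0 <= B by apply: sumr_ge0 => i _; exact: m_ge0.
have A0 : 0 <= A by apply: sumr_ge0 => i _; apply: sumr_ge0 => j _; exact: m_ge0.
have P0 : 0 <= P by exact: m_ge0.
have [Pz|Pp] := eqVneq P 0.
  have [Bz|Bp] := eqVneq B 0.
    by rewrite Bz Pz expr2 !mul0r.
  have Bp' : 0 < B by rewrite lt_def Bp B0.
  have lam0 : 0 <= (A + 1) / B by rewrite divr_ge0 // addr_ge0.
  have := H _ lam0; rewrite Pz mulr0 addr0 -mulrA divfK //.
  by lra.
have Pp' : 0 < P by rewrite lt_def Pp P0.
have lam0 : 0 <= B / P by rewrite divr_ge0.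
have lamP : B / P * P = B by rewrite divfK.
have := H _ lam0; move: lamP; set lam := B / P => lamP H'.
rewrite expr2 in H' *; nra.
Qed.

End L.

Lemma split_sum (R : realType) (s : seq nat) (f : nat -> nat -> R) : uniq s ->
  (forall i j, f i j = f j i) ->
  \sum_(i <- s) \sum_(j <- s) f i j =
  \sum_(i <- s) f i i + 2 * \sum_(i <- s) \sum_(j <- s | (i < j)%N) f i j.
Proof.
move=> us fs.
have e i : i \in s -> \sum_(j <- s) f i j =
    \sum_(j <- s | (i < j)%N) f i j + (f i i + \sum_(j <- s | (j < i)%N) f i j).
  move=> si.
  rewrite (bigID (fun j => (i < j)%N)) /=; congr (_ + _).
  rewrite (bigID (fun j => j == i)) /=; congr (_ + _).
    rewrite (eq_bigl (pred1 i)); last by move=> j /=; case: ltngtP => // ->.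
    by rewrite -big_filter filter_pred1_uniq // big_seq1.
  by apply: eq_bigl => j /=; case: ltngtP.
have X : \sum_(i <- s) \sum_(j <- s | (j < i)%N) f i j =
    \sum_(i <- s) \sum_(j <- s | (i < j)%N) f i j.
  rewrite (exchange_big_dep predT) //=.
  by apply: eq_bigr => j _; apply: eq_bigr => i _.
rewrite big_seq (eq_bigr _ e) -big_seq !big_split /= X.
by rewrite addrCA mulr2n mulrDl mul1r addrA.
Qed.

Lemma m_le d (T : measurableType d) (R : realType) (mu : probability T R)
  (X Y : set T) : measurable X -> measurable Y -> X `<=` Y ->
  fine (mu X) <= fine (mu Y).
Proof.
move=> mX mY XY; rewrite -lee_fin -!muE //; apply: le_measure => //; rewrite inE //.
Qed.

Local Close Scope ring_scope.
Theorem theorem2 (d : measure_display) (T : measurableType d) (R : realType)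
  (mu : probability T R) (E : nat -> set T)
  (mE : forall i, measurable (E i))
  (C' c : R) (hC' : (0 < C')%R) (hc : (0 < c)%R)
  (S : nat -> {fset nat})
  (hSmin : forall M : nat, exists k0 : nat, forall k, (k0 <= k)%N ->
             forall i, i \in S k -> (M <= i)%N)
  (hS : exists k0 : nat, forall k, (k0 <= k)%N ->
     (c%:E <= \sum_(i <- S k) mu (E i))%E /\
     (\sum_(s <- S k) \sum_(t <- S k | (s < t)%N) mu (E s `&` E t)
        <= C'%:E * ((\sum_(i <- S k) mu (E i)) * (\sum_(i <- S k) mu (E i))))%E)
  (hM1 : condM1 mu E) :
  mu (lim_sup_set E) = 1%E.

Proof.
Local Open Scope ring_scope.
have muE' := @muE d T R mu.
pose G t := \bigcup_(j in [set j | (t <= j)%N]) E j.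
have mG t : measurable (G t) by apply: bigcup_measurable => j _; exact: mE.
have mLS : measurable (lim_sup_set E).
  apply: bigcap_measurable; [by exists 0 | move=> k _; exact: mG].
set p := fine (mu (lim_sup_set E)).
have p1 : p <= 1 by exact: m_le1.
have p0 : 0 <= p by exact: m_ge0.
rewrite muE //; congr (_%:E).
have [plt1|] := ltP p 1; last by move=> h; apply/eqP; rewrite eq_le p1.
exfalso.
pose K := c^-1 + 2 * C'.
have K0 : 0 < K by rewrite addr_gt0 // ?invr_gt0 // mulr_gt0.
pose q := (1 - p) / 2.
have q0 : 0 < q by rewrite divr_gt0 // subr_gt0.
pose gam := q ^+ 2 / K.
have gam0 : 0 < gam by rewrite divr_gt0 // exprn_gt0.
pose eta := Num.min (gam / 2) ((1 - p) / 4).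
have eta0 : 0 < eta.
  rewrite lt_min; apply/andP; split; first exact: divr_gt0.
  by apply: divr_gt0 => //; rewrite subr_gt0.
have eta1 : eta <= gam / 2 by rewrite ge_min lexx.
have eta2 : eta <= (1 - p) / 4 by rewrite ge_min lexx orbT.
have pG t : p <= fine (mu (G t)).
  by rewrite -lee_fin -!muE //; exact: lim_sup_set_ub.
have [t1 Ht1] : exists t1, fine (mu (G t1)) < p + eta.
  have cv := lim_sup_set_cvg mu E mE.
  have /cv : (mu (G 0%N) < +oo)%E.
    by rewrite (le_lt_trans (probability_le1 _ _)) ?ltry.
  rewrite [X in _ --> X]muE // => /fine_cvgP[_ /cvgr_dist_lt /(_ _ eta0)].
  move=> [N _ HN]; exists N; have := HN N (leqnn N).
  by rewrite ltr_norml /= -/p -/(G N) => /andP[h1 h2]; lra.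
pose H n := \bigcup_(j in [set j | (t1 <= j <= t1 + n.+1)%N]) E j.
have mH n : measurable (H n) by apply: bigcup_measurable => j _; exact: mE.
have HG n : H n `<=` G t1.
  by move=> x [j /= /andP[j1 j2] Ejx]; exists j.
have [n Hn] : exists n, fine (mu (G t1)) - eta < fine (mu (H n)).
  have UH : \bigcup_n H n = G t1.
    apply/seteqP; split => x.
      by move=> [n _ /HG].
    move=> [j /= tj Ejx]; exists (j - t1)%N => //; exists j => //=.
    by apply/andP; split => //; lia.
  have ndH : nondecreasing_seq H.
    move=> a b ab; apply/subsetPset => x [j /= /andP[j1 j2] Ejx].
    by exists j => //=; apply/andP; split => //; lia.
  have := @nondecreasing_cvg_mu _ _ _ mu H mH ltac:(by rewrite UH) ndH.
  rewrite UH.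
  rewrite [X in _ --> X]muE // => /fine_cvgP[_ /cvgr_dist_lt /(_ _ eta0)].
  move=> [N _ HN]; exists N; have := HN N (leqnn N).
  by rewrite ltr_norml /= => /andP[h1 h2]; lra.
set A := H n.
set a := fine (mu A).
have mA : measurable A by exact: mH.
have aG : a <= fine (mu (G t1)) by apply: m_le => //; exact: HG.
have a0 : 0 <= a by exact: m_ge0.
pose delta := (1 - p) / 4.
have delta0 : 0 < delta by apply: divr_gt0 => //; rewrite subr_gt0.
have q12 : (t1 < t1 + n.+1)%N by rewrite addnS ltnS leq_addr.
have [i0 Hi0] := hM1 delta delta0 t1 (t1 + n.+1)%N q12.
have Hi (i : nat) : (i0 <= i)%N -> fine (mu (E i `&` A)) <= (1 + delta) * a * fine (mu (E i)).
  move=> ii0; have := Hi0 i ii0 => /=.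
  rewrite setIC -/(H n) -/A (muE' _ mA) (muE' _ (mE i)) (muE' _ (measurableI _ _ (mE i) mA)).
  by rewrite -!EFinM lee_fin.
have [k0 Hk0] := hSmin (maxn t1 i0).
have [k1 Hk1] := hS.
pose k := maxn k0 k1.
have hk i : i \in S k -> (t1 <= i)%N /\ (i0 <= i)%N.
  by move=> /(Hk0 k (leq_maxl _ _)); rewrite geq_max => /andP.
have [hB hP] := Hk1 k (leq_maxr _ _).
pose B := \sum_(i <- S k) fine (mu (E i)).
pose P2 := \sum_(s <- S k) \sum_(t <- S k | (s < t)%N) fine (mu (E s `&` E t)).
have eB : (\sum_(i <- S k) mu (E i) = B%:E)%E.
  by rewrite /B -sumEFin; apply: eq_bigr => i _; exact: muE'.
have eP : (\sum_(s <- S k) \sum_(t <- S k | (s < t)%N) mu (E s `&` E t) = P2%:E)%E.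
  rewrite /P2 -sumEFin; apply: eq_bigr => i _; rewrite -sumEFin.
  by apply: eq_bigr => j _; apply: muE'; exact: measurableI.
rewrite eB lee_fin in hB.
rewrite eP eB -[X in (_ <= C'%:E * X)%E]/((B * B)%:E) -EFinM lee_fin in hP.
pose F i := E i `\` A.
have mF i : measurable (F i) by apply: measurableD.
pose U := \bigcup_(i in [set i | i \in (S k : seq nat)]) F i.
have mU : measurable U by apply: bigcup_measurable => j _; exact: mF.
have hCE := @CE d T R mu F mF (S k).
rewrite -/U in hCE.
set B' := \sum_(i <- S k) fine (mu (F i)) in hCE.
set A' := \sum_(i <- S k) \sum_(j <- S k) _ in hCE.
pose beta := 1 - (1 + delta) * a.
have hF i : i \in S k -> beta * fine (mu (E i)) <= fine (mu (F i)).
  move=> /hk[_ ii0]; have := Hi i ii0.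
  have : fine (mu (F i)) = fine (mu (E i)) - fine (mu (E i `&` A)).
    have fin : (mu (E i) < +oo)%E by rewrite (muE' _ (mE i)) ltry.
    apply: EFin_inj; rewrite EFinB -(muE' _ (mF i)) -(muE' _ (mE i)).
    by rewrite -(muE' _ (measurableI _ _ (mE i) mA)); exact: measureD.
  by rewrite /beta => ->; nra.
have hB' : beta * B <= B'.
  rewrite /B /B' mulr_sumr big_seq [X in _ <= X]big_seq.
  by apply: ler_sum => i; exact: hF.
have hA' : A' <= B + 2 * P2.
  have -> : B + 2 * P2 = \sum_(i <- S k) \sum_(j <- S k) fine (mu (E i `&` E j)).
    rewrite (@split_sum R (S k) _ (fset_uniq (S k))); last by move=> i j; rewrite setIC.
    by rewrite /B; congr (_ + _); apply: eq_bigr => i _; rewrite setIid.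
  apply: ler_sum => i _; apply: ler_sum => j _.
  apply: m_le; try exact: measurableI.
  by move=> x [[? _] [? _]].
have hUG : fine (mu A) + fine (mu U) <= fine (mu (G t1)).
  rewrite -lee_fin EFinD -!muE' //.
  rewrite -measureU //; last first.
    by apply/seteqP; split => // x [Ax [i _ [_ nAx]]].
  apply: le_measure; rewrite ?inE //; first exact: measurableU.
  move=> x [/HG //|[i /= /hk[ti _] [Eix _]]]; by exists i.
have mU0 : 0 <= fine (mu U) by exact: m_ge0.
have beq : q <= beta.
  rewrite /beta /q /delta; nra.
have B0 : 0 < B by lra.
have key : q ^+ 2 <= fine (mu U) * K.
  have cB : 1 <= c^-1 * B.
    by rewrite -(mulVf (lt0r_neq0 hc)) ler_wpM2l // invr_ge0 ltW.
  have ci0 : 0 <= c^-1 by rewrite invr_ge0 ltW.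
  rewrite /K; move: hCE hB' beq q0 B0 hA' hP cB mU0 ci0.
  move: (fine (mu U)) (c^-1) => u ci.
  clearbody q beta A' B' B P2 => hCE hB' beq q0' B0' hA' hP' cB' mU0' ci0'.
  have h1 : q * B <= B' by nra.
  have qB0 : 0 <= q * B by rewrite mulr_ge0 // ltW.
  have h2 : (q * B) ^+ 2 <= B' ^+ 2 by rewrite !expr2; apply: ler_pM.
  have h3a : B <= ci * B * B.
    by rewrite -mulrA [B * B]mulrC mulrA; rewrite ler_pMl //; lra.
  have h3 : A' <= B ^+ 2 * (ci + 2 * C').
    rewrite expr2 mulrDr; apply: (le_trans hA'); apply: lerD.
      by rewrite mulrC mulrA.
    by rewrite mulrCA ler_wpM2l // mulrC.
  have h4 : (q ^+ 2) * B ^+ 2 <= (u * (ci + 2 * C')) * B ^+ 2.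
    rewrite -exprMn; apply: (le_trans h2); apply: (le_trans hCE).
    by rewrite mulrAC -mulrA; apply: ler_wpM2l.
  by rewrite ler_pM2r // in h4; rewrite exprn_gt0.
have : gam <= fine (mu U) by rewrite /gam ler_pdivrMr.
rewrite -/a in hUG => hg.
rewrite -/A -/a in Hn; have := pG t1.
move: Hn hUG Ht1 hg eta1; move: (fine (mu (G t1))) (fine (mu U)) => x y.
clearbody a eta gam; lra.
Qed.
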